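(* Let $p_1,p_2\in\mathcal{P}_{KZ}$ be transcendental periods with $\deg(p_1)\neq\deg(p_2)$. Then $p_1/p_2$ is a transcendental number.
   Context: $\mathbb{R}_{\mathrm{alg}}=\mathbb{R}\cap\overline{\mathbb{Q}}$. Semialgebraic subsets of $\mathbb{R}^n$ are finite unions of finite intersections of sets $\{f=0\}$, $\{g>0\}$ with $f,g\in\mathbb{R}_{\mathrm{alg}}[T_1,\dots,T_n]$; $\mathcal{SA}^n$ denotes those with nonempty interior. A period is a real number $\int_X (P/Q)(x)\,dx$ (absolutely convergent) with $X\in\mathcal{SA}^n$, $P,Q\in\mathbb{R}_{\mathrm{alg}}[T_1,\dots,T_n]$, $Q$ not identically zero on $X$; $\mathcal{P}_{KZ}$ is the set of periods. For a nonzero period $p$ there exists a positive integer $k$ and a compact $K\in\mathcal{SA}^k$ with $|p|=\mathrm{vol}_k(K)$; $\deg(p)$ is the smallest such $k$, and $\deg(0)=0$. *)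

(* Defs.v *)
From HB Require Import structures.
From mathcomp Require Import all_boot all_order all_algebra.
From mathcomp Require Import all_classical all_reals all_analysis.
From mathcomp Require mpoly.

Set Implicit Arguments.
Unset Strict Implicit.
Unset Printing Implicit Defensive.

Import Order.TTheory GRing.Theory Num.Theory.
Import numFieldNormedType.Exports.
Local Open Scope classical_set_scope.
Local Open Scope ring_scope.

Section Periods.
Variable R : realType.

Definition algebraic (x : R) : Prop :=
  exists q : {poly rat}, q != 0 /\ root (map_poly ratr q) x.

Definition transcendental (x : R) : Prop := ~ algebraic x.

Definition Ralg : {pred R} := fun x => `[< algebraic x >].

Definition alg_mpoly (n : nat) (f : mpoly.mpoly n R) : Prop :=
  f \is a mpoly.mpolyOver n Ralg.

Definition peval (n : nat) (f : mpoly.mpoly n R) (x : 'rV[R]_n) : R :=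
  mpoly.meval (fun i => x ord0 i) f.

Inductive sa_atom (n : nat) :=
| SAeq of mpoly.mpoly n R
| SApos of mpoly.mpoly n R.

Definition sa_atom_poly n (a : sa_atom n) :=
  match a with SAeq f => f | SApos g => g end.

Definition sa_atom_holds n (a : sa_atom n) (x : 'rV[R]_n) : bool :=
  match a with
  | SAeq f => peval f x == 0
  | SApos g => 0 < peval g x
  end.

(* semialgebraic subsets of R^n: finite unions of finite intersections of
   sets {f = 0}, {g > 0} with f, g in R_alg[T_1..T_n] *)
Definition semialgebraic (n : nat) (X : set 'rV[R]_n) : Prop :=
  exists s : seq (seq (sa_atom n)),
    all (fun c => all (fun a => `[< alg_mpoly (sa_atom_poly a) >]) c) s /\
    X = [set x | has (fun c => all (fun a => sa_atom_holds a x) c) s].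

Definition SA (n : nat) (X : set 'rV[R]_n) : Prop :=
  semialgebraic X /\ (X°) !=set0.

(* Lebesgue integral of a nonnegative function over R^n, computed as an
   iterated one-dimensional Lebesgue integral (Tonelli). *)
Fixpoint iint (n : nat) : ('rV[R]_n -> \bar R) -> \bar R :=
  match n return ('rV[R]_n -> \bar R) -> \bar R with
  | 0 => fun f => f 0
  | n'.+1 => fun f =>
      (\int[@lebesgue_measure R]_(t in [set: R])
         iint (fun x : 'rV[R]_n' => f (row_mx (t%:M : 'rV[R]_1) x)))%E
  end.

Definition vol (k : nat) (K : set 'rV[R]_k) : \bar R :=
  iint (fun x => (\1_K x)%:E).

(* the integrand 1_X * P/Q; note x / 0 = 0 in MathComp, and the zero set of
   Q is Lebesgue-null since Q does not vanish identically on X *)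
Definition integrand (n : nat) (X : set 'rV[R]_n) (P Q : mpoly.mpoly n R)
  (x : 'rV[R]_n) : R :=
  \1_X x * (peval P x / peval Q x).

Definition is_period (p : R) : Prop :=
  exists (n : nat) (X : set 'rV[R]_n) (P Q : mpoly.mpoly n R),
    (0 < n)%N /\ SA X /\ alg_mpoly P /\ alg_mpoly Q /\
    (exists2 x, X x & peval Q x != 0) /\
    (iint (fun x => `|integrand X P Q x|%:E) < +oo)%E /\
    p = fine (iint (fun x => (Num.max (integrand X P Q x) 0)%:E))
        - fine (iint (fun x => (Num.max (- integrand X P Q x) 0)%:E)).

Definition vol_repr (p : R) (k : nat) : Prop :=
  (0 < k)%N /\
  exists K : set 'rV[R]_k, compact K /\ SA K /\ vol K = (`|p|)%:E.

Definition vol_repr_pred (p : R) : pred nat := fun k => `[< vol_repr p k >].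

(* deg p = smallest k with |p| = vol_k(K), K compact in SA^k; deg 0 = 0
   (no such k exists for p = 0 since sets in SA^k have positive volume) *)
Definition deg (p : R) : nat :=
  match pselect (exists k, vol_repr_pred p k) with
  | left h => ex_minn h
  | right _ => 0%N
  end.

End Periods.

(* Main.v *)
Require Import Defs.
From HB Require Import structures.
From mathcomp Require Import all_boot all_order all_algebra.
From mathcomp Require Import all_classical all_reals all_analysis.
From mathcomp Require Import measurable_realfun.
From mathcomp Require mpoly.
Import (canonicals, coercions) mpoly.

Set Implicit Arguments.
Unset Strict Implicit.
Unset Printing Implicit Defensive.
Import Order.TTheory GRing.Theory Num.Theory.
Import numFieldNormedType.Exports.
Local Open Scope classical_set_scope.
Local Open Scope ring_scope.

Section Alg.
Variable R : realType.

Lemma algE (x : R) : algebraic x <-> algebraicOver (ratr : {rmorphism rat -> R}) x.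
Proof.
split; first by case=> q [q0 r]; exists q.
by case=> q q0 r; exists q.
Qed.

Lemma RalgP (x : R) : reflect (algebraic x) (x \in @Ralg R).
Proof. by rewrite unfold_in /Ralg; apply: (iffP (asboolP _)). Qed.

Lemma alg_subring : subring_closed (@Ralg R).
Proof.
split.
- by apply/RalgP/algE; exact: algebraic1.
- move=> x y /RalgP/algE hx /RalgP/algE hy; apply/RalgP/algE; exact: algebraic_sub.
- move=> x y /RalgP/algE hx /RalgP/algE hy; apply/RalgP/algE; exact: algebraic_mul.
Qed.

HB.instance Definition _ := GRing.isSubringClosed.Build R (@Ralg R) alg_subring.

Lemma alg_inv (x : R) : algebraic x -> algebraic x^-1.
Proof. move/algE=> h; apply/algE; exact: algebraic_inv. Qed.

Lemma alg_opp (x : R) : algebraic x -> algebraic (- x).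
Proof. move/algE=> h; apply/algE; exact: algebraic_opp. Qed.

Lemma alg_mul (x y : R) : algebraic x -> algebraic y -> algebraic (x * y).
Proof. move=> /algE h1 /algE h2; apply/algE; exact: algebraic_mul. Qed.

Lemma alg_norm (x : R) : algebraic x -> algebraic `|x|.
Proof. by move=> h; case: (ler0P x) => _ //; exact: alg_opp. Qed.

Lemma alg0 : algebraic (0 : R).
Proof. apply/algE; exact: algebraic0. Qed.

End Alg.

Section Scl.
Variable R : realType.
Variable n : nat.

Definition scl (c : R) (y : 'rV[R]_n.+1) : 'rV[R]_n.+1 :=
  \row_j ((if j == ord0 then c else 1) * y ord0 j).

Lemma scl_comp c d y : scl c (scl d y) = scl (c * d) y.
Proof.
apply/rowP => j; rewrite !mxE; case: ifP => _; first by rewrite mulrA.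
by rewrite !mul1r.
Qed.

Lemma scl1 y : scl 1 y = y.
Proof. by apply/rowP => j; rewrite !mxE; case: ifP => _; rewrite mul1r. Qed.

Lemma scl_row c t (x : 'rV[R]_n) :
  scl c (row_mx (t%:M : 'rV[R]_1) x) = row_mx ((c * t)%:M : 'rV[R]_1) x.
Proof.
apply/rowP => j; rewrite !mxE.
case: splitP => [j1 ej|j1 ej].
  have -> : j == ord0 by apply/eqP/val_inj; rewrite /= ej; case: j1 {ej} => -[].
  by rewrite !mxE; case: j1 {ej} => -[] //= ?; rewrite !mulr1n.
have -> : (j == ord0) = false by apply/negbTE; rewrite -val_eqE /= ej.
by rewrite mul1r.
Qed.

Lemma scl_continuous c : continuous (scl c).
Proof.
move=> u A /nbhs_ballP[e /= e0 eA].
apply/nbhs_ballP; exists (e / (1 + `|c|)).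
  by rewrite /= divr_gt0 // ltr_pwDl.
move=> v [_ uv]; apply: eA; split => // i j.
have h1 : 0 < 1 + `|c| by rewrite ltr_pwDl.
have := uv ord0 j; rewrite /ball /= !mxE => h.
have hle : e / (1 + `|c|) <= e.
  by rewrite ler_pdivrMr // -{1}(mulr1 e) ler_pM2l // lerDl.
case: ifP => _; last by rewrite !mul1r; exact: lt_le_trans h hle.
rewrite -mulrBr normrM.
apply: (le_lt_trans (y := `|c| * (e / (1 + `|c|)))).
  by rewrite ler_wpM2l // ltW.
by rewrite mulrA ltr_pdivrMr // mulrDr mulr1 (mulrC `|c|) -[X in X < _]add0r ltrD2r.
Qed.
End Scl.

Section Poly.
Variable R : realType.
Variable n : nat.
Local Notation MP := (mpoly.mpoly n.+1 R).

Definition Xi (i : 'I_n.+1) : MP := mpoly.mpolyX R (mpoly.mnm1 i).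

Definition lq (c : R) : (n.+1).-tuple MP :=
  [tuple (if i == ord0 then mpoly.mpolyC n.+1 c * Xi i else Xi i) | i < n.+1].

Definition fsub (c : R) (f : MP) : MP := mpoly.comp_mpoly (lq c) f.

Lemma peval_fsub c f y : peval (fsub c f) y = peval f (scl c y).
Proof.
rewrite /peval /fsub mpoly.comp_mpoly_meval; apply: mpoly.meval_eq => i.
rewrite tnth_mktuple !mxE; case: ifP => _.
  by rewrite mpoly.mevalM mpoly.mevalC /Xi mpoly.mevalXU.
by rewrite /Xi mpoly.mevalXU mul1r.
Qed.

Lemma alg_fsub c f : algebraic c -> alg_mpoly f -> alg_mpoly (fsub c f).
Proof.
rewrite /alg_mpoly => hc hf.
rewrite /fsub mpoly.comp_mpolyE.
apply: rpred_sum => m _.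
apply: mpoly.mpolyOverZ; first by move/mpoly.mpolyOverP: hf.
apply: rpred_prod => i _; apply: rpredX.
rewrite tnth_mktuple; case: ifP => _.
  apply: rpredM; last exact: mpoly.mpolyOverX.
  by rewrite mpoly.mpolyOverC; apply/RalgP.
exact: mpoly.mpolyOverX.
Qed.
End Poly.

Section SA.
Variable R : realType.
Variable n : nat.

Definition atom_sub (c : R) (a : sa_atom R n.+1) : sa_atom R n.+1 :=
  match a with SAeq f => SAeq (fsub c f) | SApos g => SApos (fsub c g) end.

Lemma atom_sub_holds c a y : sa_atom_holds (atom_sub c a) y = sa_atom_holds a (scl c y).
Proof. by case: a => f /=; rewrite peval_fsub. Qed.

Lemma atom_sub_alg c a : algebraic c -> alg_mpoly (sa_atom_poly a) ->
  alg_mpoly (sa_atom_poly (atom_sub c a)).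
Proof. by case: a => f /= hc hf; apply: alg_fsub. Qed.

Lemma semialg_scl c (K : set 'rV[R]_n.+1) : algebraic c -> semialgebraic K ->
  semialgebraic [set y | K (scl c y)].
Proof.
move=> hc [s [hs ->]].
exists (map (map (atom_sub c)) s); split.
  rewrite all_map; apply: sub_all hs => cl /= hcl.
  rewrite all_map; apply: sub_all hcl => a /= /asboolP ha.
  by apply/asboolP; apply: atom_sub_alg.
apply/seteqP; split => y /=; rewrite has_map;
  rewrite (@eq_has _ _ (fun cl => all (fun a => sa_atom_holds a (scl c y)) cl)) //;
  move=> cl /=; rewrite all_map; apply: eq_all => a /=; by rewrite atom_sub_holds.
Qed.
End SA.

Section mulc.
Context (R : realType) (c : R).
Definition mulc : measurableTypeR R -> measurableTypeR R := fun x => c * x.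
Lemma mulc_meas : measurable_fun setT mulc.
Proof. exact: measurable_realfun.mulrl_measurable. Qed.
HB.instance Definition _ := isMeasurableFun.Build _ _ _ _ mulc mulc_meas.
End mulc.

Section mscale_leb.
Context (R : realType) (c : R) (c0 : 0 < c).
Local Notation mu := (@lebesgue_measure R).

Let cnn : {nonneg R} := NngNum (ltW c0).

Lemma lebesgue_scale (A : set R) : measurable A ->
  mu A = (c%:E * mu [set x | A (c * x)%R])%E.
Proof.
move=> mA.
have H := @lebesgue_measure_unique R (mscale cnn (pushforward mu (mulc c))).
rewrite (H (@mulc_meas R c) _ A mA) //.
move=> _ [[a b]] _ <-.
change (mu `]a, b] = (c%:E * mu (mulc c @^-1` `]a, b]))%E).
have -> : mulc c @^-1` `]a, b] = `]a / c, b / c]%classic.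
  apply/seteqP; split => x /=; rewrite !in_itv /= => /andP[h1 h2]; apply/andP; split.
  - by rewrite ltr_pdivrMr // mulrC.
  - by rewrite ler_pdivlMr // mulrC.
  - by rewrite -ltr_pdivrMl // mulrC.
  - by rewrite -ler_pdivlMl // mulrC.
rewrite !lebesgue_measure_itv /= !lte_fin ltr_pM2r ?invr_gt0 //.
case: ifP => _; last by rewrite mule0.
rewrite -!EFinD -EFinM; congr (_%:E).
by rewrite mulrDr mulrN !mulrA !(mulrC c) -!mulrA mulfV ?gt_eqF // !mulr1.
Qed.
End mscale_leb.

Section compscale.
Import HBNNSimple.
Context (R : realType) (c : R) (h : {nnsfun (measurableTypeR R) >-> R}).
Definition hsc : measurableTypeR R -> R := fun t => h (c * t).
Let hsc_meas : measurable_fun setT hsc.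
Proof.
have m1 : measurable_fun (setT : set (measurableTypeR R)) ( *%R c : measurableTypeR R -> measurableTypeR R).
  exact: measurable_realfun.mulrl_measurable.
exact: (measurableT_comp (measurable_funPT h) m1).
Qed.
HB.instance Definition _ := isMeasurableFun.Build _ _ _ _ hsc hsc_meas.
Let hsc_fin : finite_set (range hsc).
Proof. apply: (@sub_finite_set _ _ (range h)) => // y [x _ <-]; by exists (c * x). Qed.
HB.instance Definition _ := FiniteImage.Build _ _ hsc hsc_fin.
Let hsc_ge0 : forall x, 0 <= hsc x.
Proof. by move=> x; rewrite /hsc fun_ge0. Qed.
HB.instance Definition _ := isNonNegFun.Build _ _ hsc hsc_ge0.
Definition hsc_nnsfun : {nnsfun (measurableTypeR R) >-> R} := hsc.
End compscale.

Section intscale.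
Import HBNNSimple.
Context (R : realType) (c : R) (c0 : 0 < c).
Local Notation mu := (@lebesgue_measure R).

Lemma sintegral_scale (h : {nnsfun (measurableTypeR R) >-> R}) :
  sintegral mu h = (c%:E * sintegral mu (hsc_nnsfun c h))%E.
Proof.
have cnn : {nonneg R} := NngNum (ltW c0).
have E1 := integral_nnsfun mu (@measurableT _ (measurableTypeR R)) h.
have E2 := integral_nnsfun mu (@measurableT _ (measurableTypeR R)) (hsc_nnsfun c h).
rewrite !patch_setT in E1 E2.
rewrite -E1 -E2.
rewrite (eq_measure_integral (mscale (NngNum (ltW c0)) (pushforward mu (mulc c)))); last first.
  move=> A mA _; rewrite /= (lebesgue_scale c0 mA) //.
rewrite ge0_integral_mscale //=; last first.
  - by move=> x _; rewrite lee_fin fun_ge0.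
  - apply/measurable_EFinP; exact: measurable_funPT.
rewrite ge0_integral_pushforward //=; last first.
  - by move=> x _; rewrite lee_fin fun_ge0.
  - apply/measurable_EFinP; exact: measurable_funPT.
Qed.
End intscale.

Section intscale2.
Import HBNNSimple.
Context (R : realType).
Local Notation mu := (@lebesgue_measure R).

Lemma le_int_scale (c : R) (c0 : 0 < c) (g : R -> \bar R) (g0 : forall x, (0 <= g x)%E) :
  (\int[mu]_(t in [set: R]) g t <= c%:E * \int[mu]_(t in [set: R]) g (c * t)%R)%E.
Proof.
rewrite (ge0_integralTE mu g0) (ge0_integralTE mu (fun x => g0 (c * x))).
apply: ge_ereal_sup => _ [h hg <-].
rewrite (sintegral_scale c0); apply: lee_wpmul2l; first by rewrite lee_fin ltW.
apply: ereal_sup_ubound; exists (hsc_nnsfun c h) => // x; exact: hg.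
Qed.

Lemma int_scale (c : R) (c0 : 0 < c) (g : R -> \bar R) (g0 : forall x, (0 <= g x)%E) :
  (\int[mu]_(t in [set: R]) g (t / c)%R = c%:E * \int[mu]_(t in [set: R]) g t)%E.
Proof.
apply/eqP; rewrite eq_le; apply/andP; split.
  have := le_int_scale c0 (fun t => g0 (t / c)).
  by under [X in (_ <= _ * X)%E -> _]eq_integral do rewrite mulrC mulKf ?gt_eqF //.
have ic0 : 0 < c^-1 by rewrite invr_gt0.
have := le_int_scale ic0 g0.
under [X in (_ <= _ * X)%E -> _]eq_integral do rewrite mulrC.
move=> H; rewrite -[X in (_ <= X)%E]mul1e -(mulfV (lt0r_neq0 c0)) EFinM -muleA.
by apply: lee_wpmul2l; rewrite // lee_fin ltW.
Qed.
End intscale2.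

Section VolRepr.
Variable R : realType.

Lemma iint_ge0 n (f : 'rV[R]_n -> \bar R) : (forall x, (0 <= f x)%E) -> (0 <= iint f)%E.
Proof.
elim: n f => [|n IH] f f0 /=; first exact: f0.
by apply: integral_ge0 => t _; apply: IH => x; exact: f0.
Qed.

Lemma scl_inv n (c : R) (y : 'rV[R]_n.+1) : c != 0 -> scl c (scl c^-1 y) = y.
Proof. by move=> c0; rewrite scl_comp mulfV // scl1. Qed.

Lemma vol_scl n (c : R) (K : set 'rV[R]_n.+1) : 0 < c ->
  vol [set y | K (scl c^-1 y)] = (c%:E * vol K)%E.
Proof.
move=> c0; rewrite /vol /=.
pose G := fun s : R => iint (fun x : 'rV[R]_n => (\1_K (row_mx (s%:M : 'rV[R]_1) x))%:E).
have -> : (fun t : R => iint (fun x : 'rV[R]_n =>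
     (\1_[set y | K (scl c^-1 y)] (row_mx (t%:M : 'rV[R]_1) x))%:E)) = (fun t => G (t / c)).
  apply/funext => t; rewrite /G; congr iint; apply/funext => x.
  rewrite /indic /=; congr (EFin (nat_of_bool _)%:R); apply/idP/idP; rewrite !in_setE /= scl_row mulrC //.
rewrite (int_scale c0 (g := G)) //.
by move=> s; apply: iint_ge0 => x; rewrite lee_fin.
Qed.

Lemma interior_scl n (c : R) (K : set 'rV[R]_n.+1) x : c != 0 ->
  (K°) x -> ([set y | K (scl c y)]°) (scl c^-1 x).
Proof.
move=> c0 hx.
have h := @scl_continuous R n c (scl c^-1 x).
by apply: h; rewrite /= scl_inv.
Qed.

Lemma compact_scl n (c : R) (K : set 'rV[R]_n.+1) : c != 0 -> compact K ->
  compact [set y | K (scl c y)].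
Proof.
move=> c0 cK.
have -> : [set y | K (scl c y)] = scl c^-1 @` K.
  apply/seteqP; split => y /=.
    by move=> Ky; exists (scl c y) => //; rewrite scl_comp mulVf // scl1.
  by case=> z Kz <-; rewrite scl_inv.
apply: continuous_compact => //; apply: continuous_subspaceT.
exact: scl_continuous.
Qed.

Lemma vol_repr_scale (p a : R) k : algebraic a -> a != 0 -> vol_repr p k -> vol_repr (a * p) k.
Proof.
move=> ha a0 [k0 [K [cK [[saK intK] vK]]]]; split => //.
case: k k0 K cK saK intK vK => // n _ K cK saK intK vK.
have c0 : 0 < `|a| by rewrite normr_gt0.
have ci0 : `|a|^-1 != 0 by rewrite invr_eq0 lt0r_neq0.
exists [set y | K (scl `|a|^-1 y)]; split; first exact: compact_scl.
split; first split.
- apply: semialg_scl => //; apply: alg_inv; exact: alg_norm.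
- case: intK => x hx; exists (scl `|a| x).
  by have := interior_scl ci0 hx; rewrite invrK.
- by rewrite vol_scl // vK normrM EFinM.
Qed.
End VolRepr.

Unset Implicit Arguments.
Set Strict Implicit.
Local Close Scope classical_set_scope.
Local Open Scope ring_scope.

Theorem mainTheorem9 (R : realType) (p1 p2 : R) :
  is_period p1 -> is_period p2 ->
  transcendental p1 -> transcendental p2 ->
  deg p1 <> deg p2 ->
  transcendental (p1 / p2).
Proof.
move=> _ _ t1 t2 hdeg ha.
have p20 : p2 != 0 by apply/eqP => e; apply: t2; rewrite e; exact: alg0.
have p10 : p1 != 0 by apply/eqP => e; apply: t1; rewrite e; exact: alg0.
have a0 : p1 / p2 != 0 by rewrite mulf_neq0 // invr_eq0.
have e1 : p1 = (p1 / p2) * p2 by rewrite divfK.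
have e2 : p2 = (p1 / p2)^-1 * p1 by rewrite invf_div divfK.
have E : vol_repr_pred p1 = vol_repr_pred p2.
  apply/funext => k; rewrite /vol_repr_pred; congr asbool; apply/propext; split.
    move=> h; rewrite e2; apply: vol_repr_scale h; first exact: alg_inv.
    by rewrite invr_eq0.
  by move=> h; rewrite e1; apply: vol_repr_scale h.
by apply: hdeg; rewrite /deg E.
Qed.
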